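(* Assume $d(\eta,\cdot)$ attains its minimum over $\mathcal G$ at $g^*$. Then $\inf_{g\in\mathcal G^\circ_{ds}}d(\eta,g)=d(\eta,g^* )$, and for every OCDS prediction $g^{ds}\in\mathcal G^\circ_{ds}$, $$d(\eta,g^{ds})=d(\eta,g^* )+d(g^*,g^{ds}).$$ If in addition $b^*_j\in(0,1)$ for all $j\le p$ and $w^*_\ell\in(0,1)$ for all $\ell$, then with $g^{ds*}=g^{ds}(w^*,b^*_{1:p})$, $$d(g^*,g^{ds})=\big[d(\eta,g^{ds*})-d(\eta,g^* )\big]+\big[d(\eta,g^{ds})-d(\eta,g^{ds*})\big],$$ where the first bracket is nonnegative.
   Context: Standard setup. Let $n\ge1$, $k\ge2$, $p\ge1$ be integers and $m=p+k$. There are $n$ data points $x_1,\dots,x_n$ and $p$ rules $h^{(1)},\dots,h^{(p)}$, each a map from $\{x_1,\dots,x_n\}$ to $\{1,\dots,k\}\cup\{?\}$, where ''?'' means abstain. Let $n_j\ge1$ be the number of indices $i$ with $h^{(j)}(x_i)\neq ?$. $\Delta_k$ denotes the probability simplex in $\mathbb{R}^k$; an element $z\in\Delta_k^n\subset\mathbb{R}^{nk}$ is written $z=(z_1,\dots,z_n)$ with $z_i=(z_{i1},\dots,z_{ik})\in\Delta_k$. For $j\le p$ let $h^{(j)}\in\{0,1\}^{nk}$ also denote the vector with $h^{(j)}_{i\ell}=1$ iff $h^{(j)}(x_i)=\ell$; for $\ell\le k$ let $\vec e^{\,n}_\ell\in\{0,1\}^{nk}$ have entries $(\vec e^{\,n}_\ell)_{i\ell'}=\mathbf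 1(\ell'=\ell)$. The matrix $A\in\mathbb{R}^{m\times nk}$ has rows $a^{(j)}=h^{(j)}/n_j$ for $1\le j\le p$ and $a^{(p+\ell)}=\vec e^{\,n}_\ell/n$ for $1\le\ell\le k$. For $\theta\in\mathbb{R}^m$ put $a^{(\theta)}=A^\top\theta\in\mathbb{R}^{nk}$ (entries $a^{(\theta)}_{i\ell}$) and define $g^{(\theta)}\in\Delta_k^n$ by $g^{(\theta)}_{i\ell}=\exp(a^{(\theta)}_{i\ell})/\sum_{\ell'=1}^k\exp(a^{(\theta)}_{i\ell'})$; let $\mathcal G=\{g^{(\theta)}:\theta\in\mathbb{R}^m\}$. A fixed ''true labeling'' $\eta\in\Delta_k^n$ is given and $b^*:=A\eta\in\mathbb{R}^m$; write $b^*_j$ ($j\le p$) for the empirical rule accuracies and $w^*_\ell:=b^*_{p+\ell}$ ($\ell\le k$) for the empirical class frequencies. For $\mu,\nu\in\Delta_k^n$, $d(\mu,\nu)=\sum_{i=1}^n\mathrm{KL}(\mu_i\|\nu_i)=\sum_{i,\ell}\mu_{i\ell}\log(\mu_{i\ell}/\nu_{i\ell})$, with $0\log(0/x)=0$. One-coin Dawid–Skene (OCDS) prediction: for class frequencies $w\in\Delta_k$ and rule accuracies $b\in(0,1)^p$, $g^{ds}(w,b)\in\Delta_k^n$ is defined by $g^{ds}(w,b)_{i\ell}=\widehat g_{i\ell}/\sum_{\ell'}\widehat g_{i\ell'}$ where $\widehat g_{i\ell}=w_\ell\prod_{j:\,h^{(j)}(x_i)=\ell}b_j\prod_{j:\,h^{(j)}(x_i)\notin\{\ell,?\}}\frac{1-b_j}{k-1}$.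 $\mathcal G^\circ_{ds}=\{g^{ds}(w,b):\ w\in\Delta_k,\ 0<w_\ell<1\ \forall\ell,\ b\in(0,1)^p\}$. *)

(* Defs.v *)
From HB Require Import structures.
From mathcomp Require Import all_boot all_order all_algebra.
From mathcomp Require Import all_classical all_reals all_analysis.
Set Implicit Arguments. Unset Strict Implicit. Unset Printing Implicit Defensive.
Import Order.TTheory GRing.Theory Num.Theory.
Local Open Scope ring_scope.

Section Defs.
Variable R : realType.
Variables n k p : nat.
(* rules: h j i = Some l  iff  h^(j)(x_i) = l ; None = abstain "?" *)
Variable h : 'I_p -> 'I_n -> option 'I_k.

Definition nrule (j : 'I_p) : nat := #|[set i : 'I_n | h j i != None]|.

(* row r of the matrix A (r : 'I_(p+k), rows p+l are the class rows),
   entry (i,l) *)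
Definition Arow (r : 'I_(p + k)) (i : 'I_n) (l : 'I_k) : R :=
  match fintype.split r with
  | inl j => (h j i == Some l)%:R / (nrule j)%:R
  | inr l' => (l == l')%:R / n%:R
  end.

Definition atheta (th : 'I_(p + k) -> R) (i : 'I_n) (l : 'I_k) : R :=
  \sum_(r < p + k) th r * Arow r i l.

Definition gtheta (th : 'I_(p + k) -> R) (i : 'I_n) (l : 'I_k) : R :=
  expR (atheta th i l) / \sum_(l' < k) expR (atheta th i l').

Definition bstar (eta : 'I_n -> 'I_k -> R) (r : 'I_(p + k)) : R :=
  \sum_(i < n) \sum_(l < k) Arow r i l * eta i l.

Definition in_simplex (z : 'I_n -> 'I_k -> R) : Prop :=
  (forall i l, 0 <= z i l) /\ (forall i, \sum_(l < k) z i l = 1).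

Definition klterm (x y : R) : R := if x == 0 then 0 else x * ln (x / y).

Definition dKL (mu nu : 'I_n -> 'I_k -> R) : R :=
  \sum_(i < n) \sum_(l < k) klterm (mu i l) (nu i l).

Definition ghat (w : 'I_k -> R) (b : 'I_p -> R) (i : 'I_n) (l : 'I_k) : R :=
  w l * (\prod_(j < p | h j i == Some l) b j)
      * (\prod_(j < p | (h j i != Some l) && (h j i != None))
           ((1 - b j) / (k - 1)%:R)).

Definition gds (w : 'I_k -> R) (b : 'I_p -> R) (i : 'I_n) (l : 'I_k) : R :=
  ghat w b i l / \sum_(l' < k) ghat w b i l'.

Definition ds_param_ok (w : 'I_k -> R) (b : 'I_p -> R) : Prop :=
  [/\ (forall l, 0 < w l < 1), \sum_(l < k) w l = 1 & (forall j, 0 < b j < 1)].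

End Defs.

(* Main.v *)
Require Import Defs.
From HB Require Import structures.
From mathcomp Require Import all_boot all_order all_algebra.
From mathcomp Require Import all_classical all_reals all_analysis.
From mathcomp Require Import ring lra.
Import Order.TTheory GRing.Theory Num.Theory.
Local Open Scope ring_scope.

Lemma ln_le_sub1 {R : realType} {x : R} : 0 < x -> ln x <= x - 1.
Proof. move=> x0; have := expR_ge1Dx (ln x); rewrite lnK ?posrE //; lra. Qed.

Lemma exp_bound {R : realType} (x : R) : `|x| <= 1/2 -> expR x <= 1 + x + 2 * x^+2.
Proof.
move=> hx; have := expR_ge1Dx (- x); have := expRxMexpNx_1 x; have := expR_gt0 x.
move: hx; rewrite ler_norml => /andP[h1 h2].
set E := expR x; set F := expR (- x) => E0 EF F1.
have q : 0 <= (1 - x) * (1 + x + 2 * x^+2) - 1 by nra.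
nra.
Qed.

Lemma exp_lb {R : realType} (x : R) : `|x| <= 1/2 -> 1/2 <= expR x.
Proof. move=> hx; have := expR_ge1Dx x; move: hx; rewrite ler_norml => /andP[h1 h2]; lra. Qed.

Lemma sum_pos {R : realType} {k} {f : 'I_k -> R} (l0 : 'I_k) :
  (forall l, 0 < f l) -> 0 < \sum_l f l.
Proof.
move=> H; apply: (lt_le_trans (H l0)); rewrite (bigD1 l0) //= lerDl.
by apply: sumr_ge0 => l _; apply: ltW.
Qed.

Lemma lse_bound (R : realType) k (g u : 'I_k -> R) (t : R) :
  (forall l, 0 <= g l) -> \sum_l g l = 1 -> (forall l, `|t * u l| <= 1/2) ->
  ln (\sum_l g l * expR (- (t * u l))) <=
    - t * (\sum_l g l * u l) + 2 * t^+2 * (\sum_l g l * u l ^+ 2).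
Proof.
move=> g0 gs hu.
have ypos : 0 < \sum_l g l * expR (- (t * u l)).
  apply: (@lt_le_trans _ _ (\sum_l g l * (1/2))).
    by rewrite -mulr_suml gs; lra.
  apply: ler_sum => l _; apply: ler_wpM2l => //; apply: exp_lb.
  by rewrite normrN.
have L := ln_le_sub1 ypos. apply: le_trans L _.
rewrite lerBlDr -{2}gs !mulr_sumr -!big_split /=.
apply: ler_sum => l _.
have := @exp_bound _ (- (t * u l)); rewrite normrN => /(_ (hu l)) e.
have := g0 l; nra.
Qed.

Lemma klterm_eq {R : realType} (x y : R) : 0 <= x -> 0 < y ->
  klterm x y = x * ln x - x * ln y.
Proof.
move=> x0 y0; rewrite /klterm; case: eqP => [->|/eqP xn0]; first by rewrite !mul0r subrr.
have xp : 0 < x by rewrite lt_neqAle eq_sym xn0.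
by rewrite ln_div ?posrE // mulrBr.
Qed.

Lemma dKL_expand {R : realType} n k (mu nu : 'I_n -> 'I_k -> R) :
  (forall i l, 0 <= mu i l) -> (forall i l, 0 < nu i l) ->
  dKL mu nu = \sum_i \sum_l (mu i l * ln (mu i l)) - \sum_i \sum_l (mu i l * ln (nu i l)).
Proof.
move=> H1 H2; rewrite /dKL -sumrB; apply: eq_bigr => i _; rewrite -sumrB.
by apply: eq_bigr => l _; apply: klterm_eq.
Qed.

Lemma atheta_lin {R : realType} n k p (h : 'I_p -> 'I_n -> option 'I_k)
  (th d : 'I_(p + k) -> R) (t : R) i l :
  atheta h (fun r => th r - t * d r) i l = atheta h th i l - t * atheta h d i l.
Proof.
rewrite /atheta mulr_sumr -sumrB; apply: eq_bigr => r _; ring.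
Qed.

Lemma Z_pos {R : realType} n k p (h : 'I_p -> 'I_n -> option 'I_k)
  (th : 'I_(p + k) -> R) i : (0 < k)%N -> 0 < \sum_l expR (atheta h th i l).
Proof. move=> k0; exact: (sum_pos (Ordinal k0) (fun l => expR_gt0 _)). Qed.

Lemma gtheta_pos {R : realType} n k p (h : 'I_p -> 'I_n -> option 'I_k)
  (th : 'I_(p + k) -> R) i l : 0 < gtheta h th i l.
Proof.
rewrite /gtheta divr_gt0 ?expR_gt0 //.
exact: (sum_pos l (fun l => expR_gt0 _)).
Qed.

Lemma gtheta_sum {R : realType} n k p (h : 'I_p -> 'I_n -> option 'I_k)
  (th : 'I_(p + k) -> R) i : (0 < k)%N -> \sum_l gtheta h th i l = 1.
Proof.
move=> k0; rewrite /gtheta -mulr_suml divff //; apply: lt0r_neq0; exact: Z_pos.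
Qed.

Lemma ln_gtheta {R : realType} n k p (h : 'I_p -> 'I_n -> option 'I_k)
  (th : 'I_(p + k) -> R) i l :
  ln (gtheta h th i l) = atheta h th i l - ln (\sum_l' expR (atheta h th i l')).
Proof.
rewrite /gtheta ln_div ?posrE ?expR_gt0 ?expRK //.
exact: (sum_pos l (fun l => expR_gt0 _)).
Qed.

Lemma sum_atheta {R : realType} n k p (h : 'I_p -> 'I_n -> option 'I_k)
  (th : 'I_(p + k) -> R) (mu : 'I_n -> 'I_k -> R) :
  \sum_i \sum_l mu i l * atheta h th i l = \sum_r th r * bstar h mu r.
Proof.
transitivity (\sum_i \sum_l \sum_r th r * (Arow R h r i l * mu i l)).
  apply: eq_bigr => i _; apply: eq_bigr => l _; rewrite /atheta mulr_sumr.
  by apply: eq_bigr => r _; ring.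
under eq_bigr do rewrite exchange_big.
rewrite exchange_big; apply: eq_bigr => r _; rewrite /bstar mulr_sumr.
by apply: eq_bigr => i _; rewrite mulr_sumr.
Qed.

Lemma B_expr {R : realType} n k p (h : 'I_p -> 'I_n -> option 'I_k)
  (th : 'I_(p + k) -> R) (mu : 'I_n -> 'I_k -> R) :
  (forall i, \sum_l mu i l = 1) ->
  \sum_i \sum_l mu i l * ln (gtheta h th i l) =
  \sum_r th r * bstar h mu r - \sum_i ln (\sum_l' expR (atheta h th i l')).
Proof.
move=> Hs; rewrite -sum_atheta -sumrB; apply: eq_bigr => i _.
rewrite -[X in _ = _ - X]mul1r -(Hs i) mulr_suml -sumrB; apply: eq_bigr => l _.
by rewrite ln_gtheta mulrBr.
Qed.

Lemma pyth {R : realType} n k p (h : 'I_p -> 'I_n -> option 'I_k)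
  (eta : 'I_n -> 'I_k -> R) (thstar : 'I_(p + k) -> R) :
  (0 < k)%N -> in_simplex eta ->
  (forall r, bstar h (gtheta h thstar) r = bstar h eta r) ->
  forall th, dKL eta (gtheta h th) =
    dKL eta (gtheta h thstar) + dKL (gtheta h thstar) (gtheta h th).
Proof.
move=> k0 [e0 es] Hm th.
have gp := @gtheta_pos R n k p h.
have gn : forall (th' : 'I_(p + k) -> R) i l, 0 <= gtheta h th' i l by move=> th' i l; exact: (ltW (gp th' i l)).
have gsum : forall (th' : 'I_(p + k) -> R) i, \sum_l gtheta h th' i l = 1 by move=> th' i; apply: gtheta_sum.
rewrite !dKL_expand // !B_expr //.
have E : forall th', \sum_r th' r * bstar h (gtheta h thstar) r = \sum_r th' r * bstar h eta r.
  by move=> th'; apply: eq_bigr => r _; rewrite Hm.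
rewrite !E; ring.
Qed.

Lemma moment {R : realType} n k p (h : 'I_p -> 'I_n -> option 'I_k)
  (eta : 'I_n -> 'I_k -> R) (thstar : 'I_(p + k) -> R) :
  (0 < k)%N -> in_simplex eta ->
  (forall th, dKL eta (gtheta h thstar) <= dKL eta (gtheta h th)) ->
  forall r, bstar h (gtheta h thstar) r = bstar h eta r.
Proof.
move=> k0 [e0 es] Hmin.
set gs := gtheta h thstar.
set d := fun r => bstar h gs r - bstar h eta r.
set u := atheta h d.
set S := \sum_r d r ^+ 2.
set M := \sum_i \sum_l gs i l * u i l ^+ 2.
set U := 1 + \sum_i \sum_l `|u i l|.
set C := \sum_i \sum_l eta i l * ln (eta i l).
have gp := @gtheta_pos R n k p h.
have F : forall th, dKL eta (gtheta h th) =
    C - (\sum_r th r * bstar h eta r - \sum_i ln (\sum_l expR (atheta h th i l))).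
  by move=> th; rewrite dKL_expand // ?B_expr.
have uU : forall i l, `|u i l| <= U.
  move=> i l; rewrite /U (bigD1 i) //= (bigD1 l) //=.
  have h1 : 0 <= \sum_(l' | l' != l) `|u i l'| by apply: sumr_ge0.
  have h2 : 0 <= \sum_(i' | i' != i) \sum_l `|u i' l| by apply: sumr_ge0 => *; apply: sumr_ge0.
  lra.
have key : forall t, 0 < t -> t * U <= 1/2 -> t * S <= 2 * t^+2 * M.
  move=> t t0 tU.
  have := Hmin (fun r => thstar r - t * d r); rewrite !F.
  set Y := fun i => \sum_l gs i l * expR (- (t * u i l)).
  have e1 : \sum_r (thstar r - t * d r) * bstar h eta r =
      \sum_r thstar r * bstar h eta r - t * \sum_r d r * bstar h eta r.
    by rewrite mulr_sumr -sumrB; apply: eq_bigr => r _; ring.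
  have e2 : forall i, ln (\sum_l expR (atheta h (fun r => thstar r - t * d r) i l)) =
      ln (\sum_l expR (atheta h thstar i l)) + ln (Y i).
    move=> i; have Z0 := @Z_pos R n k p h thstar i k0.
    have Y0 : 0 < Y i.
      by rewrite /Y; apply: (sum_pos (Ordinal k0)) => l; apply: mulr_gt0; [exact: gp | exact: expR_gt0].
    rewrite -lnM ?posrE //; congr ln; rewrite /Y mulr_sumr; apply: eq_bigr => l _.
    rewrite atheta_lin /gs /gtheta mulrA mulrCA divff ?mulr1 ?lt0r_neq0 //.
    by rewrite -expRD.
  have e3 : forall i, ln (Y i) <= - t * (\sum_l gs i l * u i l) +
                                  2 * t^+2 * (\sum_l gs i l * u i l ^+ 2).
    move=> i; apply: lse_bound.
    - by move=> l; exact: (ltW (gp _ _ _)).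
    - exact: gtheta_sum.
    move=> l; rewrite normrM gtr0_norm //.
    apply: le_trans tU; apply: ler_wpM2l; [exact: ltW | exact: uU].
  have e4 : \sum_i \sum_l gs i l * u i l = \sum_r d r * bstar h gs r.
    exact: sum_atheta.
  have e5 : \sum_r d r * bstar h eta r - \sum_r d r * bstar h gs r = - S.
    by rewrite -sumrB /S -sumrN; apply: eq_bigr => r _; rewrite /d; ring.
  have e6 : \sum_i ln (Y i) <= - t * (\sum_r d r * bstar h gs r) + 2 * t^+2 * M.
    rewrite -e4 /M mulr_sumr [2 * _ * _]mulr_sumr -big_split /=; apply: ler_sum => i _.
    exact: e3.
  have e2' : \sum_i ln (\sum_l expR (atheta h (fun r => thstar r - t * d r) i l)) =
     \sum_i ln (\sum_l expR (atheta h thstar i l)) + \sum_i ln (Y i).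
    by rewrite -big_split; apply: eq_bigr => i _; exact: e2.
  rewrite e2' e1.
  move: e5 e6.
  set A := \sum_r d r * bstar h eta r.
  set B := \sum_r d r * bstar h gs r.
  set L := \sum_i ln (Y i).
  move=> e5 e6 H.
  have : t * A - t * B = - (t * S) by rewrite -mulrBr e5 mulrN.
  lra.
have S0 : 0 <= S by apply: sumr_ge0 => r _; apply: sqr_ge0.
have M0 : 0 <= M.
  by apply: sumr_ge0 => i _; apply: sumr_ge0 => l _; apply: mulr_ge0; [exact: (ltW (gp _ _ _))|apply: sqr_ge0].
have U1 : 1 <= U.
  by rewrite /U lerDl; apply: sumr_ge0 => i _; apply: sumr_ge0.
have S_eq0 : S = 0.
  apply/eqP; rewrite eq_le S0 andbT leNgt; apply/negP => Spos.
  have D0 : 0 < S + 4 * (M + 1) by lra.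
  set q := S / (S + 4 * (M + 1)).
  have hq : q * (S + 4 * (M + 1)) = S by rewrite /q divfK // lt0r_neq0.
  have q0 : 0 < q by rewrite /q divr_gt0.
  have q1 : q <= 1 by rewrite /q ler_pdivrMr // mul1r; lra.
  have U0 : 0 < 2 * U by lra.
  set t := q / (2 * U).
  have ht : t * (2 * U) = q by rewrite /t divfK // lt0r_neq0.
  have t0 : 0 < t by rewrite /t divr_gt0.
  have tU : t * U <= 1/2 by lra.
  have K := key t t0 tU.
  have K2 : S <= 2 * t * M.
    rewrite -(ler_pM2l t0); apply: (le_trans K); rewrite expr2; lra.
  have K3 : 2 * t * M <= q * M.
    apply: ler_wpM2r => //; nra.
  nra.
move=> r; apply/eqP; rewrite -subr_eq0; apply/eqP.
have /psumr_eq0P H : \sum_r d r ^+ 2 = 0 by [].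
- have := H (fun r _ => sqr_ge0 (d r)) r isT.
  by move/eqP; rewrite sqrf_eq0 => /eqP.
Qed.

Lemma split_l p k (j : 'I_p) : fintype.split (lshift k j) = inl j.
Proof. exact: (unsplitK (inl j)). Qed.

Lemma split_r p k (l : 'I_k) : fintype.split (rshift p l) = inr l.
Proof. exact: (unsplitK (inr l)). Qed.

Lemma atheta_split {R : realType} n k p (h : 'I_p -> 'I_n -> option 'I_k)
  (th : 'I_(p + k) -> R) i l :
  atheta h th i l = \sum_(j < p) th (lshift k j) * ((h j i == Some l)%:R / (nrule h j)%:R)
                    + th (rshift p l) / n%:R.
Proof.
rewrite /atheta big_split_ord /=; congr (_ + _).
  by apply: eq_bigr => j _; rewrite /Arow split_l.
rewrite (bigD1 l) //= big1 ?addr0.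
  by rewrite /Arow split_r eqxx mul1r.
by move=> l' nl; rewrite /Arow split_r eq_sym (negbTE nl) mul0r mulr0.
Qed.

Definition thds {R : realType} {n k p} (h : 'I_p -> 'I_n -> option 'I_k)
  (w : 'I_k -> R) (b : 'I_p -> R) (r : 'I_(p + k)) : R :=
  match fintype.split r with
  | inl j => (nrule h j)%:R * ln (b j * (k - 1)%:R / (1 - b j))
  | inr l => n%:R * ln (w l)
  end.

Lemma atheta_thds {R : realType} n k p (h : 'I_p -> 'I_n -> option 'I_k)
  (w : 'I_k -> R) (b : 'I_p -> R) i l :
  (1 <= n)%N -> (forall j, (1 <= nrule h j)%N) ->
  atheta h (thds h w b) i l =
  \sum_(j < p | h j i == Some l) ln (b j * (k - 1)%:R / (1 - b j)) + ln (w l).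
Proof.
move=> n1 nr; rewrite atheta_split; congr (_ + _).
  rewrite [RHS]big_mkcond; apply: eq_bigr => j _; rewrite /thds split_l.
  have nj : (nrule h j)%:R != 0 :> R by rewrite pnatr_eq0 -lt0n; exact: nr.
  case: (h j i == Some l); last by rewrite mul0r mulr0.
  by rewrite mul1r mulrAC divff // mul1r.
have n0 : n%:R != 0 :> R by rewrite pnatr_eq0 -lt0n.
by rewrite /thds split_r mulrAC divff // mul1r.
Qed.

Lemma ghat_eq {R : realType} n k p (h : 'I_p -> 'I_n -> option 'I_k)
  (w : 'I_k -> R) (b : 'I_p -> R) i l :
  (1 <= n)%N -> (2 <= k)%N -> (forall j, (1 <= nrule h j)%N) -> ds_param_ok w b ->
  ghat h w b i l = expR (atheta h (thds h w b) i l) *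
     \prod_(j < p | h j i != None) ((1 - b j) / (k - 1)%:R).
Proof.
move=> n1 k2 nr [wb ws bb].
have k1 : 0 < (k - 1)%:R :> R by rewrite ltr0n subn_gt0.
have wp : 0 < w l by case/andP: (wb l).
rewrite atheta_thds // expRD expR_sum lnK ?posrE //.
rewrite [X in _ = _ * X](bigID (fun j => h j i == Some l)) /=.
have -> : \prod_(j < p | (h j i != None) && (h j i == Some l)) ((1 - b j) / (k - 1)%:R) =
          \prod_(j < p | h j i == Some l) ((1 - b j) / (k - 1)%:R).
  by apply: eq_bigl => j; case: eqP => // ->.
have -> : \prod_(j < p | (h j i != None) && ~~ (h j i == Some l)) ((1 - b j) / (k - 1)%:R) =
          \prod_(j < p | (h j i != Some l) && (h j i != None)) ((1 - b j) / (k - 1)%:R).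
  by apply: eq_bigl => j; rewrite andbC.
rewrite /ghat [w l * _]mulrC !mulrA; congr (_ * _).
rewrite mulrAC -big_split /=; congr (_ * _); apply: eq_bigr => j _.
have [b0 b1] : 0 < b j /\ b j < 1 by case/andP: (bb j).
rewrite lnK ?posrE; last by rewrite divr_gt0 ?mulr_gt0 // subr_gt0.
have c0 : (k - 1)%:R != 0 :> R by rewrite lt0r_neq0.
have d0 : 1 - b j != 0 by rewrite subr_eq0 gt_eqF.
by rewrite mulrA divfK // mulfK.
Qed.

Lemma gds_eq {R : realType} n k p (h : 'I_p -> 'I_n -> option 'I_k)
  (w : 'I_k -> R) (b : 'I_p -> R) :
  (1 <= n)%N -> (2 <= k)%N -> (forall j, (1 <= nrule h j)%N) -> ds_param_ok w b ->
  gds h w b = gtheta h (thds h w b).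
Proof.
move=> n1 k2 nr ok; apply/funext => i; apply/funext => l.
have [wb ws bb] := ok.
have k1 : 0 < (k - 1)%:R :> R by rewrite ltr0n subn_gt0.
have K0 : 0 < \prod_(j < p | h j i != None) ((1 - b j) / (k - 1)%:R).
  apply: prodr_gt0 => j _; have [b0 b1] : 0 < b j /\ b j < 1 by case/andP: (bb j).
  by rewrite divr_gt0 // subr_gt0.
rewrite /gds /gtheta.
under eq_bigr do rewrite ghat_eq //.
rewrite ghat_eq // -mulr_suml invfM mulrACA divff ?mulr1 //.
exact: lt0r_neq0.
Qed.

Lemma gtheta_shift {R : realType} n k p (h : 'I_p -> 'I_n -> option 'I_k)
  (th th' : 'I_(p + k) -> R) (c : 'I_n -> R) :
  (forall i l, atheta h th' i l = atheta h th i l + c i) -> gtheta h th' = gtheta h th.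
Proof.
move=> H; apply/funext => i; apply/funext => l; rewrite /gtheta.
under eq_bigr do rewrite H expRD.
rewrite H expRD -mulr_suml invfM mulrACA divff ?mulr1 //.
by rewrite gt_eqF ?expR_gt0.
Qed.

Lemma other_idx k (l : 'I_k) : (2 <= k)%N -> exists l' : 'I_k, l' != l.
Proof.
move=> k2; have k0 : (0 < k)%N by apply: leq_trans k2.
have k1 : (1 < k)%N by [].
case: (eqVneq l (Ordinal k0)) => [->|ne]; last by exists (Ordinal k0); rewrite eq_sym.
by exists (Ordinal k1); apply/eqP => /(congr1 val).
Qed.

Lemma gtheta_in_ds {R : realType} n k p (h : 'I_p -> 'I_n -> option 'I_k)
  (th : 'I_(p + k) -> R) :
  (1 <= n)%N -> (2 <= k)%N -> (forall j, (1 <= nrule h j)%N) ->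
  exists w b, ds_param_ok w b /\ gtheta h th = gds h w b.
Proof.
move=> n1 k2 nr.
set E := fun l => expR (th (rshift p l) / n%:R).
set W := \sum_l E l.
have Ep : forall l, 0 < E l by move=> l; apply: expR_gt0.
have k0 : (0 < k)%N by apply: leq_trans k2.
have W0 : 0 < W by apply: (sum_pos (Ordinal k0)).
have k1 : 0 < (k - 1)%:R :> R by rewrite ltr0n subn_gt0.
set x := fun j => expR (th (lshift k j) / (nrule h j)%:R) / (k - 1)%:R.
have xp : forall j, 0 < x j by move=> j; rewrite divr_gt0 ?expR_gt0.
set w := fun l => E l / W.
set b := fun j => x j / (1 + x j).
have ok : ds_param_ok w b.
  split.
  - move=> l; apply/andP; split; first by rewrite divr_gt0.
    rewrite ltr_pdivrMr // mul1r /W (bigD1 l) //= ltrDl.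
    have [l' nl] := @other_idx k l k2.
    rewrite (bigD1 l') //=; apply: ltr_pwDl => //; apply: sumr_ge0 => *; exact: ltW.
  - by rewrite /w -mulr_suml divff // lt0r_neq0.
  - move=> j; have x0 := xp j; apply/andP; split; first by rewrite divr_gt0 // addr_gt0.
    by rewrite ltr_pdivrMr ?addr_gt0 // mul1r ltrDr.
exists w, b; split => //.
rewrite gds_eq //; symmetry; apply: (@gtheta_shift R n k p h _ _ (fun _ => - ln W)) => i l.
rewrite atheta_thds // atheta_split; rewrite -addrA; congr (_ + _).
  rewrite [LHS]big_mkcond; apply: eq_bigr => j _.
  case: (h j i == Some l); last by rewrite mul0r mulr0.
  have x0 := xp j.
  have e : b j * (k - 1)%:R / (1 - b j) = expR (th (lshift k j) / (nrule h j)%:R).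
    have d0 : 1 + x j != 0 by rewrite lt0r_neq0 // addr_gt0.
    have -> : 1 - b j = 1 / (1 + x j).
      by rewrite /b -[X in X - _](divff d0) -mulrBl addrK.
    have -> : b j * (k - 1)%:R / (1 / (1 + x j)) = x j * (k - 1)%:R.
      by rewrite /b; field; rewrite d0.
    by rewrite /x divfK // lt0r_neq0.
  by rewrite e expRK mul1r.
by rewrite /w ln_div ?posrE // expRK.
Qed.

Lemma sum_wstar {R : realType} n k p (h : 'I_p -> 'I_n -> option 'I_k)
  (eta : 'I_n -> 'I_k -> R) :
  (1 <= n)%N -> in_simplex eta -> \sum_l bstar h eta (rshift p l) = 1.
Proof.
move=> n1 [e0 es].
have n0 : n%:R != 0 :> R by rewrite pnatr_eq0 -lt0n.
rewrite /bstar exchange_big /=.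
transitivity (\sum_(i < n) (1 / n%:R : R)); last first.
  rewrite sumr_const card_ord -(mulr_natr (1 / n%:R)).
  by rewrite divfK.
apply: eq_bigr => i _; transitivity ((\sum_l eta i l) / n%:R); last by rewrite es.
rewrite exchange_big /= mulr_suml.
apply: eq_bigr => l' _; rewrite (bigD1 l') //= big1 ?addr0.
  by rewrite /Arow split_r eqxx mul1r mulrC.
by move=> l nl; rewrite /Arow split_r eq_sym (negbTE nl) mul0r mul0r.
Qed.

Local Open Scope classical_set_scope.

Theorem lemma6 (R : realType) (n k p : nat)
  (h : 'I_p -> 'I_n -> option 'I_k) (eta : 'I_n -> 'I_k -> R)
  (thstar : 'I_(p + k) -> R) :
  (1 <= n)%N -> (2 <= k)%N -> (1 <= p)%N ->
  (forall j, (1 <= nrule h j)%N) ->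
  in_simplex eta ->
  (* d(eta, .) attains its minimum over G at g* = g^(thstar) *)
  (forall th : 'I_(p + k) -> R,
      dKL eta (gtheta h thstar) <= dKL eta (gtheta h th)) ->
  let gs := gtheta h thstar in
  [/\ inf [set x | exists w b, ds_param_ok w b /\ x = dKL eta (gds h w b)]
        = dKL eta gs,
      (forall w b, ds_param_ok w b ->
         dKL eta (gds h w b) = dKL eta gs + dKL gs (gds h w b))
    & ((forall j : 'I_p, 0 < bstar h eta (lshift k j) < 1) ->
       (forall l : 'I_k, 0 < bstar h eta (rshift p l) < 1) ->
       let gdss := gds h (fun l => bstar h eta (rshift p l))
                         (fun j => bstar h eta (lshift k j)) in
       0 <= dKL eta gdss - dKL eta gs /\
       (forall w b, ds_param_ok w b ->
          dKL gs (gds h w b) =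
            (dKL eta gdss - dKL eta gs) + (dKL eta (gds h w b) - dKL eta gdss)))].
Proof.
move=> n1 k2 p1 nr es Hmin gs.
have k0 : (0 < k)%N by apply: leq_trans k2.
have Hm := @moment R n k p h eta thstar k0 es Hmin.
have P := @pyth R n k p h eta thstar k0 es Hm.
have part2 : forall w b, ds_param_ok w b ->
    dKL eta (gds h w b) = dKL eta gs + dKL gs (gds h w b).
  by move=> w b ok; rewrite gds_eq //; apply: P.
have lbG : forall w b, ds_param_ok w b -> dKL eta gs <= dKL eta (gds h w b).
  by move=> w b ok; rewrite gds_eq //; apply: Hmin.
split => //.
- set S := (X in inf X).
  have mem : S (dKL eta gs).
    have [w [b [ok E]]] := @gtheta_in_ds R n k p h thstar n1 k2 nr.
    by exists w, b; split => //; rewrite /gs E.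
  have lb : lbound S (dKL eta gs) by move=> x [w [b [ok ->]]]; apply: lbG.
  apply/le_anti/andP; split.
    by apply: ge_inf => //; exists (dKL eta gs).
  by apply: lb_le_inf => //; exists (dKL eta gs).
- move=> hb hw gdss.
  have ok : ds_param_ok (fun l => bstar h eta (rshift p l)) (fun j => bstar h eta (lshift k j)).
    by split => //; apply: sum_wstar.
  split; first by rewrite subr_ge0; apply: lbG.
  by move=> w b okwb; rewrite (part2 w b okwb); ring.
Qed.
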